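(* Let $G(x,u)=\sum_{n\ge0}\frac{u^n}{n!}G_n(x)$ and $H(x,u)=\sum_{n\ge0}\frac{u^n}{n!}H_n(x)$. Then \[H(x,u)=(1+x)\left(G(x,u)-\tfrac12G(x,u)^2\right).\]
   Context: $G_0(x)=\frac{x}{1+x}$, $H_0(x)=\frac{x(x+2)}{2(x+1)}$, and for $n\ge1$ the polynomials $G_n,H_n$ are defined by $G_1=H_1=1$, $G_{n+1}(x)=(2n+nx)G_n(x)+(1+x)^2G_n'(x)$, $H_{n+1}(x)=(2n-1+(n-1)x)H_n(x)+(1+x)^2H_n'(x)$. The identity is of formal power series in $u$ and $x$. *)

(* Defs.v *)
From HB Require Import structures.
From mathcomp Require Import all_boot all_order all_algebra fraction.
Set Implicit Arguments. Unset Strict Implicit. Unset Printing Implicit Defensive.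
Import Order.TTheory GRing.Theory Num.Theory.
Local Open Scope ring_scope.

Notation K := {fraction {poly rat}}.
Notation toK := (@FracField.tofrac _ : {poly rat} -> K).

(* gpoly m = G_{m+1}(x), for m >= 0 (so gpoly 0 = G_1 = 1) and
   G_{n+1} = (2n + n x) G_n + (1+x)^2 G_n'. *)
Fixpoint gpoly (m : nat) : {poly rat} :=
  match m with
  | 0 => 1
  | m'.+1 => ((2 * m'.+1)%:R%:P + m'.+1%:R *: 'X) * gpoly m'
             + ('X + 1) ^+ 2 * (gpoly m')^`()
  end.

(* hpoly m = H_{m+1}(x); H_{n+1} = (2n-1 + (n-1) x) H_n + (1+x)^2 H_n'. *)
Fixpoint hpoly (m : nat) : {poly rat} :=
  match m with
  | 0 => 1
  | m'.+1 => ((2 * m'.+1 - 1)%:R%:P + (m'.+1 - 1)%:R *: 'X) * hpoly m'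
             + ('X + 1) ^+ 2 * (hpoly m')^`()
  end.

Definition xK : K := toK 'X.

Definition Gn (n : nat) : K :=
  match n with
  | 0 => xK / (1 + xK)
  | n'.+1 => toK (gpoly n')
  end.

Definition Hn (n : nat) : K :=
  match n with
  | 0 => xK * (xK + 2) / (2 * (xK + 1))
  | n'.+1 => toK (hpoly n')
  end.

(* Exponential generating functions sum_n a_n u^n/n! are represented by their
   sequences of coefficients a : nat -> K.  Product of EGFs: *)
Definition egf_mul (a b : nat -> K) (n : nat) : K :=
  \sum_(k < n.+1) 'C(n, k)%:R * a k * b (n - k)%N.

Definition Gser : nat -> K := Gn.
Definition Hser : nat -> K := Hn.

(* Main.v *)
Require Import Defs.
From HB Require Import structures.
From mathcomp Require Import all_boot all_order all_algebra fraction.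
From mathcomp Require Import ring.
From Stdlib Require Import FunctionalExtensionality.
Import GRing.Theory.
Local Open Scope ring_scope.

Notation P := {poly rat}.
Definition yP : P := 'X + 1.
Definition Aq (n : nat) : P := match n with 0 => 'X | m.+1 => yP * gpoly m end.
Definition Bq (n : nat) : P := match n with 0 => 'X * ('X + 2%:R) | m.+1 => 2%:R * yP * hpoly m end.
Definition conv (a b : nat -> P) (n : nat) : P :=
  \sum_(k < n.+1) (a k * b (n - k)%N) *+ 'C(n, k).

Lemma dy : yP^`() = 1.
Proof. by rewrite /yP derivD derivX derivC addr0. Qed.

Lemma Arec n : Aq n.+1 = (n%:R * (yP + 1) - yP) * Aq n + yP ^+ 2 * (Aq n)^`().
Proof.
case: n => [|m] /=.
  rewrite derivX mulr0n !mul0r sub0r /yP; ring.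
rewrite derivM dy mul1r -mul_polyC !polyC_natr.
rewrite /yP; ring.
Qed.

Lemma Brec n : Bq n.+1 = (n%:R * (yP + 1) - 2%:R * yP) * Bq n + yP ^+ 2 * (Bq n)^`().
Proof.
case: n => [|m] /=.
  rewrite !derivE /= mulr0n !mul0r sub0r /yP. ring. 
rewrite !derivM dy -mul_polyC !polyC_natr -(polyC_natr _ 2) derivC.
have -> : (2 * m.+1 - 1)%N = (2 * m).+1 by rewrite mulnS.
rewrite subSS subn0 /yP. ring.
Qed.

Lemma convS a b n : conv a b n.+1 = conv (fun k => a k.+1) b n + conv a (fun k => b k.+1) n.
Proof.
rewrite /conv big_ord_recl /= bin0 subn0.
under eq_bigr => i _ do rewrite /bump /= add1n subSS binS mulrnDr.
rewrite big_split /= addrA addrC; congr (_ + _).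
rewrite [in RHS]big_ord_recl /= bin0 subn0; congr (_ + _).
rewrite big_ord_recr /= bin_small // mulr0n addr0.
apply: eq_bigr => i _; rewrite /bump /= add1n subnSK //.
Qed.

Lemma conv_deriv a b n : (conv a b n)^`() = conv (fun k => (a k)^`()) b n + conv a (fun k => (b k)^`()) n.
Proof.
rewrite /conv raddf_sum; apply/esym; rewrite -big_split /=; apply: eq_big => // i _; apply/esym.
by rewrite raddfMn /= derivM mulrnDl.
Qed.

Definition Cq := conv Aq Aq.

Lemma Crec n : Cq n.+1 = (n%:R * (yP + 1) - 2%:R * yP) * Cq n + yP ^+ 2 * (Cq n)^`().
Proof.
rewrite /Cq convS conv_deriv /conv -!big_split !mulr_sumr -big_split; apply: eq_big => // -[i Hi] _.
change (Aq i.+1 * Aq (n - i) *+ 'C(n, i) + Aq i * Aq (n - i).+1 *+ 'C(n, i) = (n%:R * (yP + 1) - 2%:R * yP) * (Aq i * Aq (n - i) *+ 'C(n, i)) + yP ^+ 2 * ((Aq i)^`() * Aq (n - i) *+ 'C(n, i) + Aq i * (Aq (n - i))^`() *+ 'C(n, i))).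
rewrite [Aq i.+1]Arec [Aq (n - i).+1]Arec natrB; last by rewrite -ltnS.
move: (Aq i) (Aq (n - i)) (Aq i)^`() (Aq (n - i))^`() yP ('C(n, i)) => p q r s t c.
ring.
Qed.

Lemma key n : Bq n + Cq n = 2%:R * yP * Aq n.
Proof.
elim: n => [|n IH].
  rewrite /Cq /conv big_ord1.
  change ('X * ('X + 2%:R) + 'X * 'X *+ 'C(0, 0) = 2%:R * ('X + 1) * 'X :> {poly rat}).
  rewrite bin0 mulr1n. ring.
rewrite Brec Crec Arec.
have EB : (Bq n)^`() = (2%:R * yP * Aq n)^`() - (Cq n)^`() by rewrite -IH derivD addrK.
have EB0 : Bq n = 2%:R * yP * Aq n - Cq n by rewrite -IH addrK.
rewrite EB EB0 !derivM dy -(polyC_natr _ 2) derivC; ring.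
Qed.

Definition tyK : K := toK yP.

Lemma tyK0 : tyK != 0.
Proof. by rewrite /tyK tofrac_eq0 /yP -polyC1 monic_neq0 // monicXaddC. Qed.

Lemma tyE : tyK = xK + 1.
Proof. by rewrite /tyK /yP rmorphD rmorph1. Qed.

Lemma two0 : (2%:R : K) != 0.
Proof.
have -> : (2%:R : K) = toK (2%:R%:P) by rewrite polyC_natr rmorph_nat.
by rewrite tofrac_eq0 polyC_eq0.
Qed.

Lemma L1 (F : fieldType) (a t : F) : t != 0 -> a = t * a / t.
Proof. move=> h; field. exact: h. Qed.

Lemma L3 (F : fieldType) (a b t : F) k : t != 0 -> k%:R * (a / t) * (b / t) = (a * b) *+ k / t ^+ 2.
Proof. move=> h; rewrite -mulr_natr; field. exact: h. Qed.

Lemma L4 (F : fieldType) (A B C t : F) : t != 0 -> (2%:R : F) != 0 -> C = 2%:R * t * A - B ->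
  B / (2%:R * t) = t * (A / t - 2^-1 * (C / t ^+ 2)).
Proof. move=> h1 h2 ->; field. by rewrite h1 h2. Qed.

Lemma GA n : Gn n = toK (Aq n) / tyK.
Proof.
case: n => [|m].
  change (xK / (1 + xK) = xK / tyK).
  by rewrite tyE (addrC xK).
change (toK (gpoly m) = toK (yP * gpoly m) / tyK).
rewrite rmorphM.
apply: L1; exact: tyK0.
Qed.

Lemma HB n : Hn n = toK (Bq n) / (2%:R * tyK).
Proof.
case: n => [|m].
  change (xK * (xK + 2) / (2 * (xK + 1)) = toK ('X * ('X + 2%:R)) / (2%:R * tyK)).
  by rewrite rmorphM rmorphD rmorph_nat tyE.
change (toK (hpoly m) = toK (2%:R * yP * hpoly m) / (2%:R * tyK)).
rewrite !rmorphM rmorph_nat.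
apply: L1. by rewrite mulf_neq0 ?two0 ?tyK0.
Qed.

Lemma GC n : egf_mul Gn Gn n = toK (Cq n) / tyK ^+ 2.
Proof.
rewrite /egf_mul /Cq /conv rmorph_sum mulr_suml; apply: eq_bigr => i _.
rewrite !GA rmorphMn rmorphM.
apply: L3; exact: tyK0.
Qed.

Theorem mainTheorem7 :
  Hser = (fun n => (1 + xK) * (Gser n - 2^-1 * egf_mul Gser Gser n)).
Proof.
apply: functional_extensionality => n.
rewrite /Hser /Gser HB GA GC.
have T : 1 + xK = tyK by rewrite tyE (addrC xK).
rewrite T.
apply: L4; [exact: tyK0 | exact: two0 |].
have := congr1 toK (key n).
rewrite rmorphD !rmorphM rmorph_nat => <-.
by rewrite (addrC (toK (Bq n))) addrK.
Qed.
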